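(* Let $\mathbb{E}$ be a countable subset of $\mathbb{R}$ with $0\in\mathbb{E}$, and let $\mathcal{V}$ be a closed $\mathbb{E}$-vine over a complete metric space $(X,d)$. Assume that for every $n\ge0$ we have $\mathcal{V}_{(n)}=\overline{\pi_n[\mathcal{V}_{(n+1)}]}$. Then either $\mathcal{V}=\emptyset$ or $\mathcal{V}$ is not well founded.
   Context: For finite $G\subset\mathbb{N}$, $[\mathbb{E},G]=\{f:\mathbb{N}\to\mathbb{E}:\mathrm{supp}(f)\subset G\}$ (so $[\mathbb{E},\emptyset]=\{0\}$). An $\mathbb{E}$-bunch over a set $X$ is an element $\chi=(x_f)_{f\in[\mathbb{E},G]}\in X^{[\mathbb{E},G]}$ for some finite $G\subset\mathbb{N}$. For $\chi=(x_f)_{f\in[\mathbb{E},F]}$ and $\psi=(y_f)_{f\in[\mathbb{E},G]}$ write $\chi\preceq\psi$ if $F$ is an initial segment of $G$ and $y_f=x_f$ for all $f\in[\mathbb{E},F]$. An $\mathbb{E}$-vine over $X$ is a set $\mathcal{V}$ of $\mathbb{E}$-bunches over $X$ such that $\chi\in\mathcal{V}$ and $\psi\preceq\chi$ imply $\psi\in\mathcal{V}$. It is well founded if $(\mathcal{V},\preceq)$ contains no infinite totally ordered subset. For $n\ge0$, $\mathcal{V}_{(n)}=\{(x_f)_{f\in[\mathbb{E},G]}\in\mathcal{V}:|G|=n\}$, a subset of the disjoint union $\bigcup_{G\in[\mathbb{N}]^n}X^{[\mathbb{E},G]}$, each $X^{[\mathbb{E},G]}$ carrying the product topology. $\mathcal{V}$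 is closed if $\mathcal{V}\cap X^{[\mathbb{E},G]}$ is closed in $X^{[\mathbb{E},G]}$ for every finite $G$. For $G\in[\mathbb{N}]^{n+1}$ put $G'=G\setminus\{\max G\}$ and define $\pi_n:\mathcal{V}_{(n+1)}\to\mathcal{V}_{(n)}$ by $\pi_n((x_f)_{f\in[\mathbb{E},G]})=(x_f)_{f\in[\mathbb{E},G']}$. The closure in the hypothesis is taken in $\bigcup_{G\in[\mathbb{N}]^n}X^{[\mathbb{E},G]}$. *)

(* Defs.v *)
From HB Require Import structures.
From mathcomp Require Import all_boot all_order all_algebra finmap.
From mathcomp Require Import all_classical all_reals all_analysis.
Set Implicit Arguments. Unset Strict Implicit. Unset Printing Implicit Defensive.
Import Order.TTheory GRing.Theory Num.Theory.
Local Open Scope classical_set_scope.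
Local Open Scope ring_scope.

Section Vines.
Variables (R : realType) (E : set R) (X : Type).

Definition in_EG (G : {fset nat}) (f : nat -> R) : Prop :=
  (forall n, E (f n)) /\ (forall n, f n != 0 -> n \in G).

Definition EG (G : {fset nat}) : Type := {f : nat -> R | in_EG G f}.

Definition bunch : Type := {G : {fset nat} & EG G -> X}.

Definition bdom (chi : bunch) : {fset nat} := projT1 chi.

Definition initseg (F G : {fset nat}) : Prop :=
  (F `<=` G)%fset /\ (forall a b, a \in F -> b \in G -> (b < a)%N -> b \in F).

Definition bprec (chi psi : bunch) : Prop :=
  initseg (projT1 chi) (projT1 psi) /\
  forall (f : nat -> R) (hF : in_EG (projT1 chi) f) (hG : in_EG (projT1 psi) f),
    projT2 psi (exist _ f hG) = projT2 chi (exist _ f hF).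

Definition is_vine (V : set bunch) : Prop :=
  forall chi psi, V chi -> bprec psi chi -> V psi.

Definition well_founded_vine (V : set bunch) : Prop :=
  ~ exists S : set bunch, S `<=` V /\ infinite_set S /\
      (forall a b, S a -> S b -> bprec a b \/ bprec b a).

Definition slice (V : set bunch) (G : {fset nat}) : set (EG G -> X) :=
  [set x | V (existT _ G x)].

Definition fmax (G : {fset nat}) : nat := \max_(i <- G) i.
Definition fdropmax (G : {fset nat}) : {fset nat} := (G `\ fmax G)%fset.

(* the slice at G (with #|G| = n) of pi_n[V_(n+1)] *)
Definition proj_slice (V : set bunch) (n : nat) (G : {fset nat}) : set (EG G -> X) :=
  [set y | exists (H : {fset nat}) (x : EG H -> X),
      V (existT _ H x) /\ #|` H| = n.+1 /\ fdropmax H = G /\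
      forall (f : nat -> R) (hG : in_EG G f) (hH : in_EG H f),
        y (exist _ f hG) = x (exist _ f hH)].
End Vines.
Arguments slice {R E X} V G _.
Arguments proj_slice {R E X} V n G _.

Definition closed_vine (R : realType) (E : set R) (X : topologicalType)
  (V : set (bunch E X)) : Prop :=
  forall G : {fset nat}, closed (slice V G : set {ptws EG E G -> X}).

(* Main.v *)
Require Import Defs.
From HB Require Import structures.
From mathcomp Require Import all_boot all_order all_algebra finmap.
From mathcomp Require Import all_classical all_reals all_analysis.
From mathcomp Require Import lra.
Import Order.TTheory GRing.Theory Num.Theory.
Local Open Scope classical_set_scope.
Local Open Scope ring_scope.

Lemma ptws_eval_cvg (I : Type) (X : topologicalType) (F : set_system {ptws I -> X})
  {FF : Filter F} (f : {ptws I -> X}) (i : I) :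
  F --> f -> (fun g : {ptws I -> X} => g i) @ F --> f i.
Proof.
move=> /(@cvg_sup _ _ _ F f FF) /(_ i) Fi.
have := @initial_continuous _ _ (fun g : I -> X => g i) f.
move=> C.
have := cvg_trans (cvg_app (fun g : I -> X => g i) Fi) C.
done.
Qed.

Lemma ptws_cvg (I : Type) (X : topologicalType) (F : set_system {ptws I -> X})
  {FF : Filter F} (f : {ptws I -> X}) :
  (forall i, (fun g : {ptws I -> X} => g i) @ F --> f i) -> F --> f.
Proof.
move=> H.
have := (@cvg_sup _ _ (fun i => Topological.class (initial_topology (fun g : I -> X => g i))) F f FF).
move=> [_ P].
have Q : forall i, F --> (f : initial_topology (fun g : I -> X => g i)).
  move=> i A /= [_ [[B Bop <-] Bfs sBfA]].
  have : nbhs (f i) B by rewrite nbhsE; exists B.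
  move=> /H; rewrite nbhs_filterE => FB.
  rewrite nbhs_filterE; exact: (filterS sBfA FB).
exact: (P Q).
Qed.

Lemma geom_cvg (R : realType) (X : completePseudoMetricType R) (u : nat -> X) (N : nat) :
  (forall k, (N <= k)%N -> ball (u k) ((2%:R ^+ k)^-1) (u k.+1)) -> cvgn u.
Proof.
move=> H.
have key : forall m j, (N <= m)%N -> forall d : R, 0 < d ->
    ball (u m) (2 * (2%:R ^+ m)^-1 - 2 * (2%:R ^+ (m + j)%N)^-1 + d) (u (m + j)%N).
  move=> m j Nm; elim: j => [|j IH] d d0.
    by rewrite !addn0 subrr add0r; exact: ballxx.
  have := ball_triangle (IH d d0) (H (m + j)%N (leq_trans Nm (leq_addr _ _))).
  rewrite addnS; apply: le_ball.
  rewrite exprS invfM.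
  set a := (2%:R ^+ (m + j)%N)^-1.
  lra.
apply: cauchy_cvg; apply: cauchy_exP => eps eps0.
have [m [Nm hm]] : exists m, (N <= m)%N /\ 2 * (2%:R ^+ m)^-1 < eps.
  pose M := maxn N (Num.Def.archi_bound (2 / eps)).
  exists M; split; first exact: leq_maxl.
  have h1 : 2 / eps < M%:R.
    apply: lt_le_trans (archi_boundP _) _.
      by apply: divr_ge0 => //; apply: ltW.
    by rewrite ler_nat leq_maxr.
  have h2 : (M%:R : R) <= 2%:R ^+ M.
    by rewrite -natrX ler_nat ltnW // ltn_expl.
  have p : (0 : R) < 2%:R ^+ M by apply: exprn_gt0.
  rewrite ltr_pdivrMr // mulrC -ltr_pdivrMr //; exact: lt_le_trans h1 h2.
exists (u m); exists m => // k /= mk.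
rewrite -(subnKC mk).
apply: (le_ball _ (key m (k - m)%N Nm (2 * (2%:R ^+ (m + (k - m))%N)^-1) _)); last first.
  by apply: mulr_gt0 => //; apply: invr_gt0; apply: exprn_gt0.
rewrite subrK; exact: ltW.
Qed.

Section Main.
Variables (R : realType) (E : set R) (X : completePseudoMetricType R).
Variable (g : nat -> R).
Hypothesis gsurj : E `<=` range g.

Definition phi (k : nat) : nat -> R :=
  let s := odflt [::] (@choice.unpickle (seq nat) k) in
  fun n => if (n < size s)%N then g (nth 0%N s n) else 0.

Lemma fmax_ge (G : {fset nat}) n : n \in G -> (n <= fmax G)%N.
Proof. by move=> nG; rewrite /fmax; apply: (@leq_bigmax_seq nat (enum_fset G) xpredT id n). Qed.

Lemma phi_cover (G : {fset nat}) f : in_EG E G f -> exists k, phi k = f.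
Proof.
move=> [fE fG].
have [c hc] : exists c : nat -> nat, forall n, g (c n) = f n.
  have H : forall n, exists m, g m = f n.
    by move=> n; have [m _ e] := gsurj _ (fE n); exists m.
  have [c hc] := @choice nat nat (fun n m => g m = f n) H.
  by exists c.
exists (@choice.pickle (seq nat) (mkseq c (fmax G).+1)); apply: funext => n.
rewrite /phi choice.pickleK /odflt /oapp size_mkseq; case: ltnP => hn.
  by rewrite nth_mkseq.
apply/esym/eqP; apply: contraTT hn => /fG /fmax_ge.
by rewrite -ltnNge ltnS.
Qed.

Lemma in_EG_sub (G H : {fset nat}) f : in_EG E G f -> (G `<=` H)%fset -> in_EG E H f.
Proof.
move=> [fE fG] GH; split => // n /fG; exact: (fsubsetP GH).
Qed.


Variable x0 : X.
Definition ev (b : bunch E X) (f : nat -> R) : X :=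
  match pselect (in_EG E (projT1 b) f) with
  | left h => projT2 b (exist _ f h)
  | right _ => x0
  end.

Lemma evE b f (h : in_EG E (projT1 b) f) : ev b f = projT2 b (exist _ f h).
Proof.
rewrite /ev; case: pselect => [h'|//].
by rewrite (Prop_irrelevance h h').
Qed.

Variable V : set (bunch E X).
Hypothesis hcl : forall (n : nat) (G : {fset nat}), #|` G| = n ->
     slice V G = closure (proj_slice V n G : set {ptws EG E G -> X}).

Lemma step (b : bunch E X) (k : nat) (eps : R) : 0 < eps -> V b ->
  exists b', [/\ V b', fdropmax (projT1 b') = projT1 b,
     #|` projT1 b'| = (#|` projT1 b|).+1 &
     forall i, (i <= k)%N -> in_EG E (projT1 b) (phi i) ->
       ball (ev b (phi i)) eps (ev b' (phi i))].
Proof.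
case: b => G z /= eps0 Vz.
have : (closure (proj_slice V #|` G| G : set {ptws EG E G -> X})) z.
  by rewrite -(hcl _ _ (erefl #|` G|)).
move=> /(_ [set y : {ptws EG E G -> X} | forall i : 'I_k.+1, in_EG E G (phi i) ->
   ball (ev (existT _ G z) (phi i)) eps (ev (existT _ G y) (phi i))]).
case.
- apply: (@filter_forall _ _ (fun (i : 'I_k.+1) (y : {ptws EG E G -> X}) =>
    in_EG E G (phi i) ->
   ball (ev (existT _ G z) (phi i)) eps (ev (existT _ G y) (phi i))) (nbhs (z : {ptws EG E G -> X})) _) => i.
  case: (pselect (in_EG E G (phi i))) => h; last by apply: nearW => y /h.
  have := @ptws_eval_cvg _ X (nbhs (z : {ptws EG E G -> X})) (nbhs_filter _) (z : {ptws EG E G -> X}) (exist _ (phi i) h) cvg_id.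
  move=> /(_ _ (@nbhsx_ballx _ _ (z (exist _ (phi i) h)) eps eps0)).
  move=> hN; near=> y => _.
  rewrite (evE (existT _ G z) _ h) (evE (existT _ G y) _ h) /=.
  near: y; exact: hN.
- move=> y [[H [x [VHx [cardH [dropH agree]]]]] By].
  exists (existT _ H x); split => //=.
  move=> i ik h.
  have hH : in_EG E H (phi i).
    by apply: (@in_EG_sub G H (phi i) h); rewrite -dropH /fdropmax fsubsetDl.
  have := By (Ordinal (ik : (i < k.+1)%N)) h.
  by rewrite (evE (existT _ G y) _ h) (evE (existT _ H x) _ hH) /= agree.
Unshelve. all: by end_near. Qed.

Lemma initseg_refl (G : {fset nat}) : initseg G G.
Proof. by split; [exact: fsubset_refl | move=> a b _ ->]. Qed.

Lemma initseg_trans (F G H : {fset nat}) :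
  initseg F G -> initseg G H -> initseg F H.
Proof.
move=> [FG hFG] [GH hGH]; split; first exact: fsubset_trans FG GH.
move=> a b aF bH ba.
have bG : b \in G := hGH a b (fsubsetP FG _ aF) bH ba.
exact: hFG a b aF bG ba.
Qed.

Lemma initseg_drop (H : {fset nat}) : initseg (fdropmax H) H.
Proof.
split; first exact: fsubsetDl.
move=> a b; rewrite /fdropmax !in_fsetD1 => /andP [_ aH] bH ba.
rewrite bH andbT; apply/eqP => bm.
by move: (fmax_ge _ _ aH); rewrite -bm leqNgt ba.
Qed.

Hypothesis hvine : is_vine V.
Hypothesis hclosed : closed_vine V.

Definition eps k : R := (2%:R ^+ k)^-1.

Lemma step_fun : exists stp : nat -> bunch E X -> bunch E X,
  forall k b, V b -> [/\ V (stp k b), fdropmax (projT1 (stp k b)) = projT1 b,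
     #|` projT1 (stp k b)| = (#|` projT1 b|).+1 &
     forall i, (i <= k)%N -> in_EG E (projT1 b) (phi i) ->
       ball (ev b (phi i)) (eps k) (ev (stp k b) (phi i))].
Proof.
have H : forall kb : nat * bunch E X, exists b', V kb.2 ->
   [/\ V b', fdropmax (projT1 b') = projT1 kb.2,
     #|` projT1 b'| = (#|` projT1 kb.2|).+1 &
     forall i, (i <= kb.1)%N -> in_EG E (projT1 kb.2) (phi i) ->
       ball (ev kb.2 (phi i)) (eps kb.1) (ev b' (phi i))].
  move=> [k b] /=; case: (pselect (V b)) => Vb; last by exists b.
  have [|b' hb'] := step b k (eps k) _ Vb.
    by rewrite /eps invr_gt0 exprn_gt0.
  by exists b'.
have [f hf] := choice H.
by exists (fun k b => f (k, b)) => k b Vb; apply: (hf (k, b)).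
Qed.

Lemma main_nwf (b0 : bunch E X) : V b0 -> ~ well_founded_vine V.
Proof.
move=> Vb0.
have [stp hstp] := step_fun.
pose s : nat -> bunch E X := fix s k := match k with 0 => b0 | k'.+1 => stp k' (s k') end.
have Vs : forall k, V (s k).
  by elim => [|k IH] //=; case: (hstp k _ IH).
pose D k := projT1 (s k).
have hD : forall k, fdropmax (D k.+1) = D k.
  by move=> k; case: (hstp k _ (Vs k)).
have hcard : forall k, #|` D k| = (#|` D 0| + k)%N.
  elim => [|k IH]; first by rewrite addn0.
  by case: (hstp k _ (Vs k)) => _ _ -> _; rewrite -/(D k) IH addnS.
have hball : forall k i, (i <= k)%N -> in_EG E (D k) (phi i) ->
    ball (ev (s k) (phi i)) (eps k) (ev (s k.+1) (phi i)).
  by move=> k i ik hi; case: (hstp k _ (Vs k)) => _ _ _; apply.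
have hinit : forall n m, (n <= m)%N -> initseg (D n) (D m).
  move=> n; elim => [|m IH] nm.
    by move: nm; rewrite leqn0 => /eqP ->; exact: initseg_refl.
  move: nm; rewrite leq_eqVlt => /orP [/eqP -> | nm]; first exact: initseg_refl.
  apply: initseg_trans (IH nm) _; rewrite -(hD m); exact: initseg_drop.
have hsub : forall n m, (n <= m)%N -> (D n `<=` D m)%fset.
  by move=> n m nm; case: (hinit n m nm).
have hcvg : forall n f, in_EG E (D n) f -> cvgn (fun k => ev (s k) f).
  move=> n f hf; have [i ei] := phi_cover _ _ hf.
  apply: (@geom_cvg _ _ _ (maxn n i)) => k hk.
  rewrite -ei; apply: hball; first exact: leq_trans (leq_maxr _ _) hk.
  rewrite ei; apply: (@in_EG_sub (D n) (D k) f hf); apply: hsub.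
  exact: leq_trans (leq_maxl _ _) hk.
pose w n : EG E (D n) -> X := fun y => lim ((fun k => ev (s k) (sval y)) @ \oo).
pose c n : bunch E X := existT _ (D n) (w n).
have hprec : forall a b, (a <= b)%N -> bprec (c a) (c b).
  by move=> a b ab; split => //=; exact: hinit.
move=> WF; apply: WF; exists (range c); split; [|split].
- move=> _ [n _ <-].
  pose u k : {ptws EG E (D n) -> X} := fun y => ev (s k) (sval y).
  apply: (@closed_cvg _ _ \oo _ u _ (hclosed (D n))) .
    exists n => // k /= nk.
    apply: (hvine (s k) _ (Vs k)); split; first exact: hinit.
    by move=> f hF hG /=; rewrite /u /= (evE _ _ hG).
  apply: ptws_cvg => y.
  exact: (hcvg n (sval y) (svalP y)).
- move=> fin.
  have inj : {in c @^-1` range c &, injective c}.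
    move=> a b _ _ e.
    have /= eD := congr1 (@projT1 _ _) e.
    have := congr1 (fun G : {fset nat} => #|` G|) eD.
    by rewrite (hcard a) (hcard b) => /eqP; rewrite eqn_add2l => /eqP.
  have := finite_preimage inj fin.
  have -> : c @^-1` range c = setT.
    by apply/seteqP; split => // x _; exists x.
  exact: infinite_nat.
- move=> _ _ [a _ <-] [b _ <-].
  case: (leqP a b) => ab; [left | right]; apply: hprec => //.
  exact: ltnW.
Qed.

End Main.


Theorem lemma3p1 (R : realType) (E : set R) (X : completePseudoMetricType R)
  (V : set (bunch E X)) :
  countable E -> E 0 -> hausdorff_space X ->
  is_vine V -> closed_vine V ->
  (forall (n : nat) (G : {fset nat}), #|` G| = n ->
     slice V G = closure (proj_slice V n G : set {ptws EG E G -> X})) ->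
  V = set0 \/ ~ well_founded_vine V.
Proof.
move=> cE E0 _ hvine hclosed hcl.
case: (pselect (V = set0)) => [->|VN]; [by left | right].
have [b0 Vb0] : exists b, V b.
  apply: contrapT => nex; apply: VN; apply/seteqP; split => [b Vb|b] //.
  by apply: nex; exists b.
have z0 : in_EG E (projT1 b0) (fun _ => 0) by split => // n; rewrite eqxx.
have [f finj] := elimT (countable_injP E) cE.
pose g (n : nat) : R := match pselect (exists x, E x /\ f x = n) with
  | left h => proj1_sig (cid h) | right _ => 0 end.
have gs : E `<=` range g.
  move=> x Ex; exists (f x) => //; rewrite /g; case: pselect => [h|]; last first.
    by move=> nh; exfalso; apply: nh; exists x.
  case: (cid h) => y [Ey fy] /=.
  by apply: finj; rewrite ?inE.
exact: (@main_nwf R E X g gs (projT2 b0 (exist _ _ z0)) V hcl hvine hclosed b0 Vb0).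
Qed.
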